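(* Let $G$ be a plane graph, $H$ a subgraph of $G$, $L$ a list assignment for $G$ with $|L(v)|=10$ for all $v\in V(G)$, and $\alpha,\beta$ two $L$-colorings of $G$ that differ only on vertices of $H$. (i) If there exists an ordering $\sigma$ of $V(H)$ such that $d_G(v)+d_\sigma(v)\le 9$ for all $v\in V(H)$, where $d_\sigma(v)$ denotes the number of neighbors of $v$ in $H$ that follow $v$ in $\sigma$, then there is a recoloring sequence from $\alpha$ to $\beta$ that recolors each vertex of $H$ at most twice and recolors no vertex outside $H$. (ii) In particular, the same conclusion holds whenever $H$ is $2$-degenerate and $d_G(v)\le 7$ for all $v\in V(H)$.
   Context: A list assignment $L$ assigns to each vertex a set of colors; an $L$-coloring is a proper coloring $\varphi$ with $\varphi(v)\in L(v)$ for all $v$. A recoloring sequence from $\alpha$ to $\beta$ is a sequence of $L$-colorings of $G$ beginning with $\alpha$ and ending with $\beta$ in which each two consecutive colorings differ in the color of exactly one vertex (that vertex is recolored at that step). $d_G(v)$ denotes the degree of $v$ in $G$. A graph is $2$-degenerate if every subgraph has a vertex of degree at most $2$. *)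

(* Defs.v *)
(* Finite simple graphs as symmetric irreflexive relations. *)
From mathcomp Require Import all_boot all_fingroup.
Set Implicit Arguments. Unset Strict Implicit. Unset Printing Implicit Defensive.

Definition dart (T : finType) (e : rel T) := {d : T * T | e d.1 d.2}.

Definition rev_dart (T : finType) (e : rel T) (se : symmetric e) (d : dart e) : dart e :=
  exist (fun p : T * T => e p.1 p.2) ((sval d).2, (sval d).1)
        (etrans (se (sval d).2 (sval d).1) (valP d)).

Definition rotation_system (T : finType) (e : rel T) (rho : {perm dart e}) : Prop :=
  (forall d, (sval (rho d)).1 = (sval d).1) /\
  (forall d d' : dart e, (sval d).1 = (sval d').1 -> fconnect rho d d').

Definition n_faces (T : finType) (e : rel T) (se : symmetric e) (rho : {perm dart e}) : nat :=
  n_comp (frel (fun d => rho (rev_dart se d))) (fun _ : dart e => true).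

Definition isolated (T : finType) (e : rel T) : {set T} :=
  [set v | [forall u, ~~ e v u]].

(* A plane graph: a simple graph together with a combinatorial embedding of
   genus 0, i.e. Euler's formula V - E + F = 2 * (#components) holds, where each
   isolated vertex contributes one face.  Written without subtraction and with
   #darts = 2E:  2 (V + F) = 4 * #components + #darts. *)
Definition plane_graph (T : finType) (e : rel T) : Prop :=
  exists se : symmetric e, irreflexive e /\
  exists rho : {perm dart e}, rotation_system rho /\
    2 * (#|T| + (n_faces se rho + #|isolated e|)) = 4 * n_comp e (fun _ : T => true) + #|{: dart e}|.

Definition deg (T : finType) (e : rel T) (v : T) : nat := #|[set u | e v u]|.

(* d_sigma(v): neighbours of v in H (vertex set S, H induced) that follow v in sigma *)
Definition deg_sigma (T : finType) (e : rel T) (sigma : seq T) (v : T) : nat :=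
  count (fun u => e v u && (index v sigma < index u sigma)) sigma.

(* H = G[S] is 2-degenerate: every nonempty subgraph has a vertex of degree <= 2
   (it suffices to quantify over the vertex sets of induced subgraphs) *)
Definition two_degenerate (T : finType) (e : rel T) (S : {set T}) : Prop :=
  forall X : {set T}, X \subset S -> X != set0 ->
    exists2 v, v \in X & #|[set u in X | e v u]| <= 2.

Definition coloring (T : finType) := {ffun T -> nat}.

Definition L_coloring (T : finType) (e : rel T) (L : T -> seq nat) (c : coloring T) : bool :=
  [forall v, c v \in L v] && [forall u, forall v, e u v ==> (c u != c v)].

Definition differ_one (T : finType) (c c' : coloring T) : bool :=
  [exists v, (c v != c' v) && [forall w, (w != v) ==> (c w == c' w)]].

Definition recolor_count (T : finType) (c0 : coloring T) (s : seq (coloring T)) (v : T) : nat :=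
  count (fun p : coloring T * coloring T => p.1 v != p.2 v) (zip (c0 :: s) s).

Definition recoloring_sequence (T : finType) (e : rel T) (L : T -> seq nat)
    (c0 c1 : coloring T) (s : seq (coloring T)) : Prop :=
  [/\ all (L_coloring e L) (c0 :: s), path (@differ_one T) c0 s & last c0 s = c1].

Definition recolor_within_twice (T : finType) (e : rel T) (L : T -> seq nat)
    (S : {set T}) (alpha beta : coloring T) : Prop :=
  exists s : seq (coloring T), recoloring_sequence e L alpha beta s /\
    forall v, if v \in S then recolor_count alpha s v <= 2
              else recolor_count alpha s v == 0.

(* Main.v *)
Require Import Defs.
From mathcomp Require Import all_boot all_fingroup.
Set Implicit Arguments. Unset Strict Implicit. Unset Printing Implicit Defensive.

Lemma my_pairwise_rev (T : Type) (r : rel T) (s : seq T) :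
  pairwise r (rev s) = pairwise (fun x y => r y x) s.
Proof.
elim: s => [|x s IH] //.
by rewrite rev_cons pairwise_rcons [in RHS]pairwise_cons all_rev IH.
Qed.

Section Main.
Variables (T : finType) (e : rel T) (L : T -> seq nat).
Hypothesis se : symmetric e.

Lemma L_colP (c : coloring T) :
  L_coloring e L c <-> (forall v, c v \in L v) /\ (forall u v, e u v -> c u != c v).
Proof.
split.
  case/andP=> /forallP H1 /forallP H2; split=> // u v euv.
  by move: (H2 u) => /forallP /(_ v) /implyP; apply.
case=> H1 H2; apply/andP; split; apply/forallP=> // u.
by apply/forallP=> v; apply/implyP; apply: H2.
Qed.

Definition Reach (c c' : coloring T) (b : T -> nat) :=
  exists s, recoloring_sequence e L c c' s /\ forall w, recolor_count c s w <= b w.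

Lemma reach_refl (c : coloring T) : L_coloring e L c -> Reach c c (fun _ => 0).
Proof. by move=> Hc; exists [::]; split => //; split => //=; rewrite Hc. Qed.

Lemma reach_mono (c c' : coloring T) b b' : Reach c c' b -> (forall w, b w <= b' w) -> Reach c c' b'.
Proof. by case=> s [Hs Hb] Hbb; exists s; split=> // w; apply: leq_trans (Hb w) (Hbb w). Qed.

Lemma recolor_count_cat (c0 : coloring T) s1 s2 w :
  recolor_count c0 (s1 ++ s2) w = recolor_count c0 s1 w + recolor_count (last c0 s1) s2 w.
Proof.
elim: s1 c0 => [|x s1 IH] c0 //=.
move: (IH x); rewrite /recolor_count /= => ->.
by rewrite addnA.
Qed.

Lemma reach_trans (c1 c2 c3 : coloring T) b1 b2 : Reach c1 c2 b1 -> Reach c2 c3 b2 ->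
  Reach c1 c3 (fun w => b1 w + b2 w).
Proof.
case=> s1 [[A1 P1 L1] B1] [s2 [[A2 P2 L2] B2]].
exists (s1 ++ s2); split.
  split.
  - move: A1 A2 => /= /andP [-> A1] /andP [_ A2].
    by rewrite all_cat A1 A2.
  - by rewrite cat_path P1 L1 P2.
  - by rewrite last_cat L1 L2.
by move=> w; rewrite recolor_count_cat L1 leq_add.
Qed.

Definition upd (c : coloring T) v x : coloring T := [ffun w => if w == v then x else c w].

Lemma reach_step (c : coloring T) v x : L_coloring e L c -> L_coloring e L (upd c v x) ->
  Reach c (upd c v x) (fun w => w == v).
Proof.
move=> Hc Hc'.
case: (eqVneq (c v) x) => Hx.
  have -> : upd c v x = c by apply/ffunP=> w; rewrite ffunE; case: eqP => // ->.
  by apply: reach_mono (reach_refl Hc) _.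
exists [:: upd c v x]; split.
  split => //=; first by rewrite Hc Hc'.
  rewrite andbT; apply/existsP; exists v; rewrite ffunE eqxx Hx /=.
  by apply/forallP=> w; apply/implyP=> /negbTE Hw; rewrite ffunE Hw.
move=> w; rewrite /recolor_count /= addn0 ffunE.
case: (eqVneq w v) => [->|/negbTE wv]; first by case: (_ != _). 
by rewrite eqxx.
Qed.

Fixpoint cond (p : seq T) : bool :=
  if p is v :: p' then (deg e v + count (e v) p' <= 9) && cond p' else true.

Variable beta : coloring T.
Hypothesis Hbeta : L_coloring e L beta.
Hypothesis HL : forall v, uniq (L v) /\ size (L v) = 10.

Lemma pass1 p (c : coloring T) : uniq p -> L_coloring e L c -> cond p ->
  exists c', [/\ Reach c c' (fun w => w \in p), L_coloring e L c',
    (forall w, w \notin p -> c' w = c w) &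
    pairwise (fun a b => e a b ==> (c' a != beta b)) p].
Proof.
elim: p c => [|v p IH] c.
  move=> _ Hc _; exists c; split => //.
  by apply: reach_mono (reach_refl Hc) _.
move=> /= /andP [vp up] Hc /andP [Hd Hcp].
set F := [seq c u | u <- enum [set u | e v u]] ++ [seq beta u | u <- p & e v u].
have : ~~ all (fun x => x \in F) (L v).
  apply/negP => /allP Hsub.
  have := uniq_leq_size (proj1 (HL v)) Hsub.
  have E1 : size (enum [set u | e v u]) = deg e v by rewrite /deg cardE.
  rewrite (proj2 (HL v)) size_cat !size_map E1 size_filter.
  by move=> H; have := leq_trans H Hd.
case/allPn => x xL xF.
have Hc1 : L_coloring e L (upd c v x).
  case/L_colP: Hc => Hc1 Hc2; apply/L_colP; split.
    by move=> w; rewrite ffunE; case: eqP => [->|].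
  move=> a b eab; rewrite !ffunE.
  case: (eqVneq a v) => [Ea|Na]; case: (eqVneq b v) => [Eb|Nb].
  - by subst; have := Hc2 _ _ eab; rewrite eqxx.
  - apply/eqP => Exb; move: xF; rewrite Exb mem_cat negb_or => /andP [H _].
    by move: H; rewrite map_f // mem_enum inE -Ea.
  - apply/eqP => Exb; move: xF; rewrite -Exb mem_cat negb_or => /andP [H _].
    by move: H; rewrite map_f // mem_enum inE -Eb se.
  - exact: Hc2.
have [c' [R' Hc' Out' Pw']] := IH _ up Hc1 Hcp.
have c'v : c' v = x by rewrite Out' // ffunE eqxx.
exists c'; split => //.
- apply: reach_mono (reach_trans (reach_step Hc Hc1) R') _.
  move=> w; rewrite in_cons; case: (eqVneq w v) => [->|] //=.
  by rewrite (negbTE vp).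
- move=> w; rewrite in_cons negb_or => /andP [wv wp].
  by rewrite Out' // ffunE (negbTE wv).
- rewrite Pw' andbT; apply/allP => u up'.
  apply/implyP => evu; rewrite c'v; apply/negP => /eqP Exb.
  move: xF; rewrite Exb mem_cat negb_or => /andP [_ H].
  by move: H; rewrite map_f // mem_filter evu.
Qed.

Lemma pass2 q (c : coloring T) : uniq q -> L_coloring e L c -> (forall w, w \notin q -> c w = beta w) ->
  pairwise (fun a b => e b a ==> (c b != beta a)) q -> Reach c beta (fun w => w \in q).
Proof.
elim: q c => [|v q IH] c.
  move=> _ Hc Out _.
  have -> : c = beta by apply/ffunP => w; exact: Out.
  by apply: reach_mono (reach_refl Hbeta) _.
move=> /= /andP [vq uq] Hc Out.
move=> /andP [/allP Hall Pw].
have Hc1 : L_coloring e L (upd c v (beta v)).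
  case/L_colP: Hc => Hc1 Hc2; case/L_colP: Hbeta => Hb1 Hb2; apply/L_colP; split.
    by move=> w; rewrite ffunE; case: eqP => [->|].
  have key : forall b, b != v -> e v b -> beta v != c b.
    move=> b bv evb.
    case: (boolP (b \in q)) => bq.
      by have := Hall b bq; rewrite se evb /= eq_sym.
    by rewrite Out ?in_cons ?negb_or ?bv //; apply: Hb2.
  move=> a b eab; rewrite !ffunE.
  case: (eqVneq a v) => [Ea|Na]; case: (eqVneq b v) => [Eb|Nb].
  - by subst; have := Hc2 _ _ eab; rewrite eqxx.
  - by subst; apply: key.
  - by subst; rewrite eq_sym; apply: key => //; rewrite se.
  - exact: Hc2.
have O1 : forall w, w \notin q -> upd c v (beta v) w = beta w.
  move=> w wq; rewrite ffunE; case: (eqVneq w v) => [->|wv] //.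
  by apply: Out; rewrite in_cons negb_or wv.
have P1 : pairwise (fun a b => e b a ==> (upd c v (beta v) b != beta a)) q.
  rewrite -(eq_in_pairwise (P := [pred w | w != v]) (r := fun a b => e b a ==> (c b != beta a))) //.
    move=> a b /= av bv; by rewrite !ffunE (negbTE bv).
  by apply/allP => w wq /=; apply/eqP => E; move: vq; rewrite -E wq.
apply: reach_mono (reach_trans (reach_step Hc Hc1) (IH _ uq Hc1 O1 P1)) _.
by move=> w; rewrite in_cons; case: (eqVneq w v) => [->|] //=; rewrite (negbTE vq).
Qed.

Lemma deg_sigma_head v p : v \notin p -> deg_sigma e (v :: p) v = count (e v) p.
Proof.
move=> vp; rewrite /deg_sigma /= eqxx ltnn andbF add0n.
apply: eq_in_count => u up /=.
have -> : (v == u) = false by apply/negbTE; apply/eqP => E; move: vp; rewrite E up.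
by rewrite andbT.
Qed.

Lemma deg_sigma_tail v p w : v \notin p -> w != v -> deg_sigma e (v :: p) w = deg_sigma e p w.
Proof.
move=> vp wv; rewrite /deg_sigma /= eqxx eq_sym (negbTE wv) ltn0 andbF add0n.
apply: eq_in_count => u up /=.
have -> : (v == u) = false by apply/negbTE; apply/eqP => E; move: vp; rewrite E up.
by [].
Qed.

Lemma cond_of p : uniq p -> (forall v, v \in p -> deg e v + deg_sigma e p v <= 9) -> cond p.
Proof.
elim: p => [|v p IH] //= /andP [vp up] H.
apply/andP; split.
  by rewrite -deg_sigma_head // H // mem_head.
apply: IH => // w wp.
have wv : w != v by apply/eqP => E; move: vp; rewrite -E wp.
by rewrite -(deg_sigma_tail vp wv) H // in_cons wp orbT.
Qed.

Lemma build_sigma (S : {set T}) : two_degenerate e S -> forall n (X : {set T}),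
  #|X| <= n -> X \subset S ->
  exists sigma, perm_eq sigma (enum X) /\ forall v, v \in X -> deg_sigma e sigma v <= 2.
Proof.
move=> H2; elim=> [|n IH] X.
  rewrite leqn0 => /eqP /cards0_eq -> _; exists [::]; split => //.
  by rewrite enum_set0.
move=> HX XS.
case: (eqVneq X set0) => [->|Xn0].
  by exists [::]; split => //; rewrite enum_set0.
have [v vX Hv] := H2 X XS Xn0.
have : #|X :\ v| <= n.
  by move: HX; rewrite (cardsD1 v X) vX add1n ltnS.
move=> /IH [|sigma [Ps Hs]].
  by apply: subset_trans XS; apply: subsetDl.
have us : uniq sigma by rewrite (perm_uniq Ps) enum_uniq.
have vs : v \notin sigma by rewrite (perm_mem Ps) mem_enum !inE eqxx.
exists (v :: sigma); split.
  apply: uniq_perm; first by rewrite /= vs us.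
    exact: enum_uniq.
  move=> w; rewrite in_cons (perm_mem Ps) !mem_enum !inE.
  by case: (eqVneq w v) => [->|] //=; rewrite vX.
move=> w wX; case: (eqVneq w v) => [->|wv].
  rewrite deg_sigma_head // -size_filter.
  apply: leq_trans Hv; rewrite cardE.
  apply: uniq_leq_size; first exact: filter_uniq.
  move=> u; rewrite mem_filter (perm_mem Ps) !mem_enum !inE => /andP [-> /andP [_ ->]].
  by [].
rewrite deg_sigma_tail //; apply: Hs.
by rewrite !inE wv.
Qed.

End Main.

Theorem proposition6 (T : finType) (e : rel T) (S : {set T})
    (L : T -> seq nat) (alpha beta : {ffun T -> nat}) :
  plane_graph e ->
  (forall v, uniq (L v) /\ size (L v) = 10) ->
  L_coloring e L alpha -> L_coloring e L beta ->
  (forall v, v \notin S -> alpha v = beta v) ->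
  ((exists sigma : seq T, perm_eq sigma (enum S) /\
      (forall v, v \in S -> deg e v + deg_sigma e sigma v <= 9)) ->
     recolor_within_twice e L S alpha beta)
  /\
  (two_degenerate e S -> (forall v, v \in S -> deg e v <= 7) ->
     recolor_within_twice e L S alpha beta).
Proof.
case=> se _ HL Ha Hb Hout.
have part1 : (exists sigma : seq T, perm_eq sigma (enum S) /\
      (forall v, v \in S -> deg e v + deg_sigma e sigma v <= 9)) ->
     recolor_within_twice e L S alpha beta.
  case=> sigma [Ps Hd].
  have us : uniq sigma by rewrite (perm_uniq Ps) enum_uniq.
  have memS : forall w, (w \in sigma) = (w \in S) by move=> w; rewrite (perm_mem Ps) mem_enum.
  have Hc : cond e sigma by apply: cond_of => // v; rewrite memS; apply: Hd.
  have [c' [R1 Hc' Out1 Pw1]] := @pass1 T e L se beta HL sigma alpha us Ha Hc.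
  have R2 : Reach e L c' beta (fun w => w \in rev sigma).
    apply: pass2 => //; first by rewrite rev_uniq.
      by move=> w; rewrite mem_rev => ws; rewrite Out1 // Hout // -memS.
    by rewrite my_pairwise_rev.
  have [s [Rs Bs]] := reach_trans R1 R2.
  exists s; split => // v; have := Bs v; rewrite mem_rev memS.
  by case: (v \in S) => //; rewrite leqn0.
split => // H2 H7; apply: part1.
have [sigma [Ps Hs]] := build_sigma H2 (leqnn #|S|) (subxx S).
exists sigma; split => // v vS.
by rewrite -[9]/(7 + 2) leq_add // ?H7 ?Hs.
Qed.
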